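(* Let $h_1,\dots,h_{2k}$ satisfy the FFD relations with $h_j^2=b_j^2\mathbb{1}$, $b_j\neq0$, and let $\theta_1,\dots,\theta_{2k}$ be arbitrary complex numbers with $\cos\theta_j\neq0$. Write $c_j:=\cos\theta_j$, $h'_j:=\sin\theta_j\,b_j^{-1}h_j$, with the conventions $c_j:=1$, $h'_j:=0$ for $j\le0$. Then $$\mathcal{V}_{2k}=\mathcal{V}_{2k-2}+\big(c_{2k-2}h'_{2k}+c_{2k}c_{2k-2}c_{2k-3}h'_{2k-1}+c_{2k-5}h'_{2k-2}h'_{2k-3}h'_{2k}\big)\mathcal{V}_{2k-4}+c_{2k-4}c_{2k-5}h'_{2k}h'_{2k-3}\mathcal{V}_{2k-6}+c_{2k-4}c_{2k-5}c_{2k-6}c_{2k-7}h'_{2k-5}h'_{2k-2}h'_{2k-3}h'_{2k}\mathcal{V}_{2k-8},$$ and $$\mathcal{V}_{2k-1}=\mathcal{V}_{2k-2}+c_{2k-2}c_{2k-3}h'_{2k-1}\mathcal{V}_{2k-4},$$ where $\mathcal{V}_j:=\mathbb{1}$ for $j\le0$.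
   Context: FFD relations: $h_mh_{m+1}=-h_{m+1}h_m$, $h_mh_{m+2}=-h_{m+2}h_m$, $h_mh_l=h_lh_m$ for $|l-m|>2$, $h_m^2=b_m^2\mathbb{1}$, in a unital associative complex algebra. Local gates $g_j:=\cos(\theta_j/2)\mathbb{1}+\sin(\theta_j/2)\,b_j^{-1}h_j$. For $1\le n\le k$: $G_{2n}:=(g_2g_1)(g_4g_3)\cdots(g_{2n}g_{2n-1})$, $G_{2n}^{\top}:=(g_{2n-1}g_{2n})\cdots(g_3g_4)(g_1g_2)$ (reversed order), $\mathcal{V}_{2n}:=G_{2n}G_{2n}^{\top}$; $G_{2n-1}$ and $\mathcal{V}_{2n-1}$ are obtained from $G_{2n}$, $\mathcal{V}_{2n}$ by setting $\theta_{2n}=0$ (i.e. $g_{2n}=\mathbb{1}$). All $\mathcal{V}_j$ use the same angles $\theta_1,\theta_2,\dots$. *)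

(* Defs.v *)
From mathcomp Require Import all_boot all_algebra.
From mathcomp Require Import reals sequences exp trigo.
From mathcomp Require Export complex.
Set Implicit Arguments. Unset Strict Implicit. Unset Printing Implicit Defensive.
Import GRing.Theory.
Local Open Scope ring_scope.
Local Open Scope complex_scope.

Definition Rcosh (R : realType) (y : R) : R := (expR y + expR (- y)) / 2.
Definition Rsinh (R : realType) (y : R) : R := (expR y - expR (- y)) / 2.

Definition Ccos (R : realType) (z : R[i]) : R[i] :=
  (cos (Re z) * Rcosh (Im z)) -i* (sin (Re z) * Rsinh (Im z)).
Definition Csin (R : realType) (z : R[i]) : R[i] :=
  (sin (Re z) * Rcosh (Im z)) +i* (cos (Re z) * Rsinh (Im z)).

Section FFD.
Variables (R : realType) (A : algType R[i]).
Variables (h : nat -> A) (b : nat -> R[i]).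

Definition FFD (N : nat) : Prop :=
  [/\ (forall m, (1 <= m)%N -> (m + 1 <= N)%N -> h m * h (m + 1) = - (h (m + 1) * h m)),
      (forall m, (1 <= m)%N -> (m + 2 <= N)%N -> h m * h (m + 2) = - (h (m + 2) * h m)),
      (forall m l, (1 <= m <= N)%N -> (1 <= l <= N)%N ->
          ((m + 2 < l)%N || (l + 2 < m)%N) -> h m * h l = h l * h m)
    & (forall m, (1 <= m <= N)%N -> h m ^+ 2 = b m ^+ 2 *: 1)].

Definition gate (theta : nat -> R[i]) (j : nat) : A :=
  Ccos (theta j / 2) *: 1 + (Csin (theta j / 2) / b j) *: h j.

(* G_{2n} = (g2 g1)(g4 g3)...(g_{2n} g_{2n-1}) *)
Definition Gev (theta : nat -> R[i]) (n : nat) : A :=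
  \prod_(i < n) (gate theta (i.*2 + 2) * gate theta (i.*2 + 1)).

(* G_{2n}^T = (g_{2n-1} g_{2n}) ... (g3 g4)(g1 g2) *)
Definition GevT (theta : nat -> R[i]) (n : nat) : A :=
  \prod_(i < n) (gate theta ((n - i).*2 - 1) * gate theta ((n - i).*2)).

Definition Vev (theta : nat -> R[i]) (n : nat) : A := Gev theta n * GevT theta n.

(* V_{2n-1} : V_{2n} with theta_{2n} set to 0 *)
Definition Vodd (theta : nat -> R[i]) (n : nat) : A :=
  Vev (fun j => if j == n.*2 then 0 else theta j) n.

(* V_j for all j : nat, with V_0 = 1 (convention V_j = 1 for j <= 0;
   negative indices are handled by truncated subtraction in nat) *)
Definition V (theta : nat -> R[i]) (j : nat) : A :=
  if j == 0%N then 1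
  else if odd j then Vodd theta (j.+1)./2 else Vev theta j./2.

Definition cc (theta : nat -> R[i]) (j : nat) : R[i] :=
  if j == 0%N then 1 else Ccos (theta j).

Definition hp (theta : nat -> R[i]) (j : nat) : A :=
  if j == 0%N then 0 else (Csin (theta j) / b j) *: h j.

End FFD.

(* Main.v *)
Require Import Defs.
From mathcomp Require Import all_boot all_algebra.
From mathcomp Require Import reals complex sequences exp trigo.
From mathcomp Require Import ring zify ssrAC.
Import GRing.Theory Num.Theory.
Local Open Scope ring_scope.

Section Alg.
Variables (K : fieldType) (A : algType K).

Lemma lin2 (a b c d q : K) (v : A) : v * v = q *: 1 ->
  (a *: 1 + b *: v) * (c *: 1 + d *: v) = (a * c + b * d * q) *: 1 + (a * d + b * c) *: v.
Proof.
move=> vv.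
rewrite mulrDr !mulrDl -!scalerAl -!scalerAr !mul1r !mulr1 vv !scalerA.
by rewrite !scalerDl (AC (2*2) ((1*4)*(3*2)))%AC.
Qed.
End Alg.

Lemma reorder (V : zmodType) (a b c d e f : V) :
  (a + ((b + c) + (d - e))) + f = a + ((b + f) + d) + c - e.
Proof. by rewrite (AC ((1*(2*2))*1) (((1*((2*6)*4))*3)*5))%AC. Qed.

Section Gates.
Variables (K : fieldType) (A : algType K).
Variables (u : nat -> A) (al be : nat -> K) (N : nat).
Hypothesis Hsq : forall j, (1 <= j <= N)%N -> u j * u j = 1.
Hypothesis Ha1 : forall m, (1 <= m)%N -> (m + 1 <= N)%N -> u m * u (m + 1) = - (u (m + 1) * u m).
Hypothesis Ha2 : forall m, (1 <= m)%N -> (m + 2 <= N)%N -> u m * u (m + 2) = - (u (m + 2) * u m).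
Hypothesis Hc : forall m l, (1 <= m <= N)%N -> (1 <= l <= N)%N ->
          ((m + 2 < l)%N || (l + 2 < m)%N) -> u m * u l = u l * u m.
Hypothesis Hpy : forall j, al j ^+ 2 + be j ^+ 2 = 1.

Definition g j := locked (al j *: 1 + be j *: u j).
Definition gb j := locked (al j *: 1 + (- be j) *: u j).
Definition cj j := locked (al j ^+ 2 - be j ^+ 2).
Definition sj j := locked (2 * al j * be j).

Lemma uanti i j : (1 <= i <= N)%N -> (1 <= j <= N)%N ->
  [|| i + 1 == j, i + 2 == j, j + 1 == i | j + 2 == i]%N -> u i * u j = - (u j * u i).
Proof.
move=> Hi Hj; case/or4P=> /eqP E.
- by rewrite -E Ha1 //; lia.
- by rewrite -E Ha2 //; lia.
- by rewrite -E Ha1 ?opprK //; lia.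
- by rewrite -E Ha2 ?opprK //; lia.
Qed.

Lemma ucomm i j : (1 <= i <= N)%N -> (1 <= j <= N)%N ->
  (i = j \/ i + 2 < j \/ j + 2 < i)%N -> u i * u j = u j * u i.
Proof.
move=> Hi Hj [-> //|[E|E]]; apply: Hc => //; by rewrite E ?orbT.
Qed.

Lemma uA i j : (1 <= i <= N)%N -> (1 <= j <= N)%N ->
  (i + 1 = j \/ i + 2 = j \/ j + 1 = i \/ j + 2 = i)%N -> u i * u j = - (u j * u i).
Proof.
move=> Hi Hj H; apply: uanti => //.
by case: H => [->|[->|[->|->]]]; rewrite eqxx ?orbT.
Qed.

Lemma comm_g {x j} : x * u j = u j * x -> x * g j = g j * x.
Proof.
move=> E; by rewrite /g -lock mulrDr mulrDl -!scalerAl -!scalerAr mulr1 mul1r E.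
Qed.

Lemma acomm_g {x j} : x * u j = - (u j * x) -> x * g j = gb j * x /\ g j * x = x * gb j.
Proof.
move=> E; rewrite /g /gb -!lock !mulrDr !mulrDl -!scalerAl -!scalerAr !mulr1 !mul1r E.
by rewrite !scaleNr scalerN opprK.
Qed.

Lemma gg {j} : (1 <= j <= N)%N -> g j * g j = 1 + sj j *: u j.
Proof.
move=> Hj; rewrite /g -lock (@lin2 _ _ _ _ _ _ 1) ?Hsq ?scale1r //.
have e1 : al j * al j + be j * be j * 1 = 1 by rewrite mulr1 -(Hpy j) !expr2.
have e2 : al j * be j + be j * al j = sj j by rewrite /sj -lock; ring.
by rewrite e1 e2 scale1r.
Qed.

Lemma gbg {j} : (1 <= j <= N)%N -> gb j * g j = cj j *: 1.
Proof.
move=> Hj; rewrite /g /gb -!lock (@lin2 _ _ _ _ _ _ 1) ?Hsq ?scale1r //.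
have -> : al j * be j + - be j * al j = 0 by ring.
have -> : al j * al j + - be j * be j * 1 = cj j by rewrite /cj -lock; ring.
by rewrite scale0r addr0.
Qed.

Definition PP m y := g m.*2.+2 * g m.*2.+1 * y * (g m.*2.+1 * g m.*2.+2).

Section Pair.
Variable m : nat.
Hypothesis HN : (m.*2.+2 <= N)%N.
Local Notation a := m.*2.+2.
Local Notation b := m.*2.+1.

Lemma Ha : (1 <= a <= N)%N. Proof. lia. Qed.
Lemma Hb : (1 <= b <= N)%N. Proof. lia. Qed.
Lemma uba : u b * u a = - (u a * u b).
Proof. apply: uA; [exact: Hb | exact: Ha | lia]. Qed.

Lemma P_cc y : y * u a = u a * y -> y * u b = u b * y ->
  PP m y = y * (1 + sj a *: u a + (cj a * sj b) *: u b).
Proof.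
move=> ya yb; have ca := comm_g ya; have cb := comm_g yb.
rewrite /PP -[g a * g b * y]mulrA -cb [g a * (y * g b)]mulrA -ca -!mulrA; congr (y * _).
have [Hba Hab] := acomm_g uba.
rewrite [g b * (g b * _)]mulrA (gg Hb) mulrDl mul1r mulrDr (gg Ha) -scalerAl -scalerAr.
rewrite mulrA Hab -mulrA (gbg Ha) -scalerAr mulr1 scalerA mulrC.
by [].
Qed.

Lemma P_ac y : y * u a = - (u a * y) -> y * u b = u b * y ->
  PP m y = y * (cj a *: 1 + sj b *: u b + (sj b * sj a) *: (u b * u a)).
Proof.
move=> ya yb; have [ca1 ca2] := acomm_g ya; have cb := comm_g yb.
rewrite /PP -[g a * g b * y]mulrA -cb [g a * (y * g b)]mulrA ca2 -!mulrA; congr (y * _).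
have [Hba Hab] := acomm_g uba.
rewrite [g b * (g b * _)]mulrA (gg Hb) mulrDl mul1r mulrDr (gbg Ha) -scalerAl -scalerAr.
rewrite mulrA -Hba -mulrA (gg Ha) mulrDr mulr1 -scalerAr scalerDr scalerA.
by rewrite addrA.
Qed.

Lemma P_ca y : y * u a = u a * y -> y * u b = - (u b * y) ->
  PP m y = cj b *: (y * (1 + sj a *: u a)).
Proof.
move=> ya yb; have ca := comm_g ya; have [cb1 cb2] := acomm_g yb.
rewrite /PP -[g a * g b * y]mulrA cb2 !mulrA -[_ * gb b * g b]mulrA (gbg Hb).
rewrite -scalerAr mulr1 -scalerAl -ca -mulrA (gg Ha).
by [].
Qed.

Lemma P_aa y : y * u a = - (u a * y) -> y * u b = - (u b * y) ->
  PP m y = (cj a * cj b) *: y.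
Proof.
move=> ya yb; have [ca1 ca2] := acomm_g ya; have [cb1 cb2] := acomm_g yb.
rewrite /PP -[g a * g b * y]mulrA cb2 !mulrA -[_ * gb b * g b]mulrA (gbg Hb).
rewrite -scalerAr mulr1 -scalerAl ca2 -mulrA (gbg Ha) -scalerAr mulr1 scalerA.
by rewrite mulrC.
Qed.
End Pair.

Definition Gv (gt : nat -> A) m := \prod_(i < m) (gt (i.*2 + 2)%N * gt (i.*2 + 1)%N).
Definition GvT (gt : nat -> A) m := \prod_(i < m) (gt ((m - i).*2 - 1)%N * gt ((m - i).*2)%N).

Lemma Gv_rec gt m : Gv gt m.+1 = Gv gt m * (gt m.*2.+2%N * gt m.*2.+1%N).
Proof. by rewrite /Gv big_ord_recr /= addn2 addn1. Qed.

Lemma GvT_rec gt m : GvT gt m.+1 = (gt m.*2.+1%N * gt m.*2.+2%N) * GvT gt m.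
Proof.
rewrite /GvT big_ord_recl subn0 doubleS subSS subn0; congr (_ * _).

Qed.

Lemma Gv_ext gt1 gt2 m : (forall j, (j <= m.*2)%N -> gt1 j = gt2 j) ->
  Gv gt1 m = Gv gt2 m /\ GvT gt1 m = GvT gt2 m.
Proof.
move=> E; split; apply: eq_bigr => i _; rewrite !E //.
all: rewrite -?muln2; have := ltn_ord i; lia.
Qed.

Definition T m y := Gv g m * y * GvT g m.
Definition W m := T m 1.

Lemma T0 y : T 0 y = y.
Proof. by rewrite /T /Gv /GvT !big_ord0 mul1r mulr1. Qed.

Lemma T_rec m y : T m.+1 y = T m (PP m y).
Proof. by rewrite /T /PP Gv_rec GvT_rec !mulrA. Qed.

Lemma TD m x y : T m (x + y) = T m x + T m y.
Proof. by rewrite /T mulrDr mulrDl. Qed.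

Lemma TZ m c y : T m (c *: y) = c *: T m y.
Proof. by rewrite /T -scalerAr -scalerAl. Qed.

Lemma T_pull m x y : (forall j, (1 <= j <= m.*2)%N -> x * u j = u j * x) ->
  T m (x * y) = x * T m y.
Proof.
elim: m y => [|m IH] y Hx; first by rewrite !T0.
have Hx' : forall j, (1 <= j <= m.*2)%N -> x * u j = u j * x.
  move=> j Hj; apply: Hx; rewrite doubleS; lia.
have ca : x * g m.*2.+2%N = g m.*2.+2%N * x.
  by apply: comm_g; apply: Hx; rewrite doubleS; lia.
have cb : x * g m.*2.+1%N = g m.*2.+1%N * x.
  by apply: comm_g; apply: Hx; rewrite doubleS; lia.
rewrite !T_rec -IH //; congr (T m _).
rewrite /PP -[g _ * g _ * (x * y)]mulrA [g m.*2.+1 * (x * y)]mulrA -cb.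
by rewrite -[x * g _ * y]mulrA [g _ * (x * _)]mulrA -ca !mulrA.
Qed.

Definition cz j := if j == 0%N then 1 else cj j.
Definition hz j := if j == 0%N then 0 else sj j *: u j.

Lemma W0 : W 0 = 1. Proof. by rewrite /W T0. Qed.

Lemma T_pull1 m x : (forall j, (1 <= j <= m.*2)%N -> x * u j = u j * x) ->
  T m x = x * W m.
Proof. by move=> H; rewrite -[x in T m x]mulr1 T_pull. Qed.

Lemma cc_comm (x y z : A) : x * z = z * x -> y * z = z * y -> (x * y) * z = z * (x * y).
Proof. by move=> H1 H2; rewrite -mulrA H2 !mulrA H1. Qed.
Lemma aa_comm (x y z : A) : x * z = - (z * x) -> y * z = - (z * y) -> (x * y) * z = z * (x * y).
Proof. by move=> H1 H2; rewrite -mulrA H2 mulrN !mulrA H1 mulNr opprK. Qed.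
Lemma ca_acomm (x y z : A) : x * z = z * x -> y * z = - (z * y) -> (x * y) * z = - (z * (x * y)).
Proof. by move=> H1 H2; rewrite -mulrA H2 mulrN !mulrA H1. Qed.

Lemma W_rec m : (m.*2.+2 <= N)%N -> W m.+1 =
  W m + sj m.*2.+2 *: T m (u m.*2.+2) + (cj m.*2.+2 * sj m.*2.+1) *: T m (u m.*2.+1).
Proof.
move=> HN; by rewrite /W T_rec (P_cc _ HN) ?mul1r ?mulr1 // !TD !TZ.
Qed.

Lemma L1 m : (m.*2.+1 <= N)%N ->
  T m (u m.*2.+1) = (cz m.*2 * cz (m.*2 - 1)%N) *: (u m.*2.+1 * W (m - 1)%N).
Proof.
case: m => [|n] HN.
  by rewrite T0 double0 sub0n /cz /= mul1r scale1r W0 mulr1.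
rewrite doubleS in HN *.
have HN' : (n.*2.+2 <= N)%N by lia.
rewrite T_rec (P_aa _ HN'); first last.
- by apply: uA; lia.
- by apply: uA; lia.
rewrite TZ (T_pull1 n (u n.*2.+3)); last by move=> j Hj; apply: ucomm; lia.
by rewrite !subSS !subn0 /cz /=.
Qed.

Lemma ac_acomm (x y z : A) : x * z = - (z * x) -> y * z = z * y -> (x * y) * z = - (z * (x * y)).
Proof. by move=> H1 H2; rewrite -mulrA H2 !mulrA H1 mulNr. Qed.

Lemma czS j : cz j.+1 = cj j.+1. Proof. by []. Qed.
Lemma hzS j : hz j.+1 = sj j.+1 *: u j.+1. Proof. by []. Qed.

Lemma L3 m : (m.*2.+2 <= N)%N ->
  T m (u m.*2.+1 * u m.*2.+2) = cz (m.*2 - 1)%N *: (u m.*2.+1 * u m.*2.+2 *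
     (W m - (cz m.*2 * cz (m.*2 - 2)%N * cz (m.*2 - 3)%N) *: (hz (m.*2 - 1)%N * W (m - 2)%N))).
Proof.
case: m => [|n] HN.
  by rewrite T0 double0 !sub0n /hz /cz /= mul0r scaler0 subr0 W0 mulr1 scale1r.
rewrite doubleS in HN *.
have HN' : (n.*2.+2 <= N)%N by lia.
have ya : u n.*2.+3 * u n.*2.+4 * u n.*2.+2 = u n.*2.+2 * (u n.*2.+3 * u n.*2.+4).
  by apply: aa_comm; apply: uA; lia.
have yb : u n.*2.+3 * u n.*2.+4 * u n.*2.+1 = - (u n.*2.+1 * (u n.*2.+3 * u n.*2.+4)).
  by apply: ac_acomm; [apply: uA | apply: ucomm]; lia.
have yc : forall j, (1 <= j <= n.*2)%N ->
    u n.*2.+3 * u n.*2.+4 * u j = u j * (u n.*2.+3 * u n.*2.+4).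
  by move=> j Hj; apply: cc_comm; apply: ucomm; lia.
rewrite T_rec (P_ca _ HN' _ ya yb) TZ (T_pull _ _ _ yc) TD TZ.
have E : W n + sj n.*2.+2 *: T n (u n.*2.+2) =
    W n.+1 - (cj n.*2.+2 * sj n.*2.+1) *: T n (u n.*2.+1) by rewrite (W_rec n HN') addrK.
rewrite -/(W n) E L1; last by lia.
rewrite !subSS !subn0 !czS hzS -scalerAl !scalerA.
congr (_ *: (_ * (_ - _ *: _))); ring.
Qed.

Lemma L2 m : (m.*2.+2 <= N)%N ->
  T m (u m.*2.+2) = u m.*2.+2 * (cz m.*2 *: W (m - 1)%N
    + (cz (m.*2 - 2)%N * cz (m.*2 - 3)%N) *: (hz (m.*2 - 1)%N * W (m - 2)%N)
    + cz (m.*2 - 3)%N *: (hz (m.*2 - 1)%N * hz m.*2 * (W (m - 1)%N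
        - (cz (m.*2 - 2)%N * cz (m.*2 - 4)%N * cz (m.*2 - 5)%N) *: (hz (m.*2 - 3)%N * W (m - 3)%N)))).
Proof.
case: m => [|n] HN.
  by rewrite T0 double0 !sub0n /hz /cz /= !mul0r !scaler0 !addr0 W0 scale1r mulr1.
rewrite doubleS in HN *.
have HN' : (n.*2.+2 <= N)%N by lia.
have ya : u n.*2.+4 * u n.*2.+2 = - (u n.*2.+2 * u n.*2.+4) by apply: uA; lia.
have yb : u n.*2.+4 * u n.*2.+1 = u n.*2.+1 * u n.*2.+4 by apply: ucomm; lia.
have yc : forall j, (1 <= j <= n.*2)%N -> u n.*2.+4 * u j = u j * u n.*2.+4.
  by move=> j Hj; apply: ucomm; lia.
rewrite T_rec (P_ac _ HN' _ ya yb) (T_pull _ _ _ yc) !TD !TZ -/(W n).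
rewrite L1; last by lia.
rewrite L3 //.
rewrite !subSS !subn0 !czS !hzS; congr (_ * (_ + _ + _)).
- rewrite -scalerAl !scalerA; congr (_ *: _); ring.
rewrite -!scalerAl -!scalerAr -!scalerAl !scalerA; congr (_ *: _); ring.
Qed.

Lemma I1 m : (m.*2.+2 <= N)%N ->
  hz m.*2.+2 * hz (m.*2 - 1)%N * hz m.*2 = hz m.*2 * hz (m.*2 - 1)%N * hz m.*2.+2.
Proof.
case: m => [|n] HN.
  by rewrite double0 sub0n /hz /= !mulr0 !mul0r.
rewrite doubleS in HN *; rewrite subSS subn0 !hzS.
rewrite -!scalerAl -!scalerAr -!scalerAl !scalerA; congr (_ *: _); first ring.
have e1 : u n.*2.+4 * u n.*2.+1 = u n.*2.+1 * u n.*2.+4 by apply: ucomm; lia.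
have e2 : u n.*2.+4 * u n.*2.+2 = - (u n.*2.+2 * u n.*2.+4) by apply: uA; lia.
have e3 : u n.*2.+1 * u n.*2.+2 = - (u n.*2.+2 * u n.*2.+1) by apply: uA; lia.
by rewrite e1 -mulrA e2 mulrN mulrA e3 mulNr opprK.
Qed.

Lemma I2 m : (m.*2.+2 <= N)%N ->
  hz m.*2.+2 * hz (m.*2 - 1)%N * hz m.*2 * hz (m.*2 - 3)%N =
  - (hz (m.*2 - 3)%N * hz m.*2 * hz (m.*2 - 1)%N * hz m.*2.+2).
Proof.
case: m => [|[|n]] HN.
- by rewrite double0 !sub0n /hz /= !mulr0 !mul0r oppr0.
- by rewrite /hz /= !mulr0 !mul0r oppr0.
rewrite !doubleS in HN *; rewrite !subSS !subn0 !hzS.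
rewrite -!scalerAl -!scalerAr -?scalerAl -?scalerAr -?scalerAl -?scalerAr !scalerA -scalerN; congr (_ *: _); first ring.
have e1 : u n.*2.+2.+4 * u n.*2.+3 = u n.*2.+3 * u n.*2.+2.+4 by apply: ucomm; lia.
have e2 : u n.*2.+2.+4 * u n.*2.+4 = - (u n.*2.+4 * u n.*2.+2.+4) by apply: uA; lia.
have e3 : u n.*2.+3 * u n.*2.+4 = - (u n.*2.+4 * u n.*2.+3) by apply: uA; lia.
have X : u n.*2.+2.+4 * u n.*2.+3 * u n.*2.+4 = u n.*2.+4 * u n.*2.+3 * u n.*2.+2.+4.
  by rewrite e1 -mulrA e2 mulrN mulrA e3 mulNr opprK.
have Y : u n.*2.+2.+4 * u n.*2.+3 * u n.*2.+4 * u n.*2.+1 =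
   - (u n.*2.+1 * (u n.*2.+2.+4 * u n.*2.+3 * u n.*2.+4)).
  apply: ac_acomm; last by apply: ucomm; lia.
  by apply: ca_acomm; [apply: ucomm|apply: uA]; lia.
by rewrite Y X !mulrA.
Qed.

Lemma even_main m : (m.*2.+2 <= N)%N ->
  W m.+1 = W m
    + (cz m.*2 *: hz m.*2.+2 + (cz m.*2.+2 * cz m.*2 * cz (m.*2 - 1)%N) *: hz m.*2.+1
       + cz (m.*2 - 3)%N *: (hz m.*2 * hz (m.*2 - 1)%N * hz m.*2.+2)) * W (m - 1)%N
    + (cz (m.*2 - 2)%N * cz (m.*2 - 3)%N) *: (hz m.*2.+2 * hz (m.*2 - 1)%N) * W (m - 2)%N
    + (cz (m.*2 - 2)%N * cz (m.*2 - 3)%N * cz (m.*2 - 4)%N * cz (m.*2 - 5)%N)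
        *: (hz (m.*2 - 3)%N * hz m.*2 * hz (m.*2 - 1)%N * hz m.*2.+2) * W (m - 3)%N.
Proof.
move=> HN.
rewrite -(I1 _ HN) -[hz (m.*2 - 3)%N * _ * _ * _]opprK -(I2 _ HN).
rewrite (W_rec _ HN) (L2 _ HN) L1; last by lia.
rewrite !hzS !czS.
rewrite !mulrDr !mulrDl.
do 6! rewrite -?scalerAl -?scalerAr ?mulrN ?mulNr ?scalerN ?scalerDr ?scalerA ?mulrDr ?mulrDl.
rewrite !mulrA.
rewrite reorder.
congr (_ + (_ *: _ + _ *: _ + _ *: _) + _ *: _ - _ *: _); ring.
Qed.

Lemma odd_main m : (m.*2.+1 <= N)%N ->
  T m (g m.*2.+1 * g m.*2.+1) = W m + (cz m.*2 * cz (m.*2 - 1)%N) *: hz m.*2.+1 * W (m - 1)%N.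
Proof.
move=> HN; rewrite gg; last by lia.
rewrite TD TZ -/(W m) L1 // hzS -scalerAl -!scalerAl !scalerA.
by congr (_ + _ *: _); rewrite mulrC.
Qed.
End Gates.

Section Trig.
Variable R : realType.
Local Open Scope complex_scope.

Lemma coshsinh (y : R) : Rcosh y ^+ 2 - Rsinh y ^+ 2 = 1.
Proof.
rewrite /Rcosh /Rsinh expRN.
have h : expR y != 0 by rewrite lt0r_neq0 // exp.expR_gt0.
field. done.
Qed.

Lemma cosh2 (y : R) : Rcosh (y + y) = Rcosh y ^+ 2 + Rsinh y ^+ 2.
Proof. rewrite /Rcosh /Rsinh opprD !expRD. by field. Qed.
Lemma sinh2 (y : R) : Rsinh (y + y) = 2 * Rsinh y * Rcosh y.
Proof. rewrite /Rcosh /Rsinh opprD !expRD. by field. Qed.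

Lemma Ctrig (w : R[i]) :
  [/\ Ccos (w + w) = Ccos w ^+ 2 - Csin w ^+ 2,
      Csin (w + w) = 2 * Ccos w * Csin w &
      Ccos w ^+ 2 + Csin w ^+ 2 = 1].
Proof.
case: w => x y; rewrite /Ccos /Csin /=.
have c2 := cos2Dsin2 x; have ch := coshsinh y.
split; apply/eqP; rewrite eq_complex /=; apply/andP; split; apply/eqP;
 rewrite ?cosh2 ?sinh2 ?cosD ?sinD; rewrite ?expr2 /=. 
1-4,6: ring.
transitivity ((cos x ^+2 + sin x^+2) * (Rcosh y ^+2 - Rsinh y^+2)); first by ring.
by rewrite c2 ch mulr1.
Qed.
End Trig.

Lemma Ccos0 (R : realType) : Ccos (0 : R[i]) = 1.
Proof.
apply/eqP; rewrite eq_complex /= /Rcosh /Rsinh oppr0 expR0 cos0 sin0.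
rewrite subrr mul0r ?mulr0 oppr0 mul1r divff ?eqxx //. by rewrite -mulr2n pnatr_eq0.
Qed.
Lemma Csin0 (R : realType) : Csin (0 : R[i]) = 0.
Proof.
apply/eqP; rewrite eq_complex /= /Rcosh /Rsinh oppr0 expR0 cos0 sin0.
by rewrite ?subrr ?mul0r ?mulr0 ?mul0r ?eqxx.
Qed.

Theorem mainTheorem11 (R : realType) (A : algType R[i])
    (h : nat -> A) (b theta : nat -> R[i]) (k : nat) :
  (1 <= k)%N ->
  FFD h b k.*2 ->
  (forall j, (1 <= j <= k.*2)%N -> b j != 0) ->
  (forall j, (1 <= j <= k.*2)%N -> Ccos (theta j) != 0) ->
  let c := cc theta in
  let h' := hp h b theta in
  let V := V h b theta in
  V k.*2 =
    V (k.*2 - 2)%N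
    + (c (k.*2 - 2)%N *: h' k.*2
       + (c k.*2 * c (k.*2 - 2)%N * c (k.*2 - 3)%N) *: h' (k.*2 - 1)%N
       + c (k.*2 - 5)%N *: (h' (k.*2 - 2)%N * h' (k.*2 - 3)%N * h' k.*2))
      * V (k.*2 - 4)%N
    + (c (k.*2 - 4)%N * c (k.*2 - 5)%N) *: (h' k.*2 * h' (k.*2 - 3)%N) * V (k.*2 - 6)%N
    + (c (k.*2 - 4)%N * c (k.*2 - 5)%N * c (k.*2 - 6)%N * c (k.*2 - 7)%N)
        *: (h' (k.*2 - 5)%N * h' (k.*2 - 2)%N * h' (k.*2 - 3)%N * h' k.*2) * V (k.*2 - 8)%N
  /\
  V (k.*2 - 1)%N =
    V (k.*2 - 2)%N + (c (k.*2 - 2)%N * c (k.*2 - 3)%N) *: h' (k.*2 - 1)%N * V (k.*2 - 4)%N.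
Proof.
move=> Hk HF Hbnz _ c h' V0; subst c h' V0.
case: k Hk HF Hbnz => [//|m] _ HF Hbnz.
set N := (m.+1).*2.
pose u j := (b j)^-1 *: h j.
pose al j := Ccos (theta j / 2).
pose be j := Csin (theta j / 2).
case: HF => F1 F2 F3 F4.
have uu i j : u i * u j = ((b i)^-1 * (b j)^-1) *: (h i * h j).
  by rewrite /u -scalerAl -scalerAr scalerA.
have Hsq : forall j, (1 <= j <= N)%N -> u j * u j = 1.
  move=> j Hj; have bj := Hbnz j Hj.
  rewrite uu -[h j * h j]expr2 F4 // scalerA.
  have -> : (b j)^-1 * (b j)^-1 * b j ^+ 2 = 1 by field.
  by rewrite scale1r.
have Ha1 : forall i, (1 <= i)%N -> (i + 1 <= N)%N -> u i * u (i + 1) = - (u (i + 1) * u i).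
  by move=> i H1 H2; rewrite !uu F1 // scalerN mulrC.
have Ha2 : forall i, (1 <= i)%N -> (i + 2 <= N)%N -> u i * u (i + 2) = - (u (i + 2) * u i).
  by move=> i H1 H2; rewrite !uu F2 // scalerN mulrC.
have Hc : forall i l, (1 <= i <= N)%N -> (1 <= l <= N)%N ->
          ((i + 2 < l)%N || (l + 2 < i)%N) -> u i * u l = u l * u i.
  by move=> i l H1 H2 H3; rewrite !uu F3 // mulrC.
have Hpy : forall j, al j ^+ 2 + be j ^+ 2 = 1.
  by move=> j; have [_ _ ->] := Ctrig _ (theta j / 2).
have Eg : forall j, gate h b theta j = g _ _ u al be j.
  by move=> j; rewrite /gate /g -lock /u scalerA.
have Veven : forall n, V h b theta n.*2 = W _ _ u al be n.
  case=> [|n]; first by rewrite /V /= W0.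
  rewrite /V doubleS /= odd_double /= doubleK /W /T mulr1.
  have -> : Vev h b theta n.+1 = Gv _ _ (gate h b theta) n.+1 * GvT _ _ (gate h b theta) n.+1 by [].
  by have [-> ->] := Gv_ext _ _ (gate h b theta) (g _ _ u al be) n.+1 (fun j _ => Eg j).
have Veven2 : forall n i, V h b theta (n.*2 - i.*2)%N = W _ _ u al be (n - i).
  by move=> n i; rewrite -doubleB Veven.
have ccE : forall j, cc theta j = cz _ al be j.
  case=> [//|j]; rewrite /cc /cz /= /cj -lock.
  by rewrite {1}(splitr (theta j.+1)); have [-> _ _] := Ctrig _ (theta j.+1 / 2).
have hpE : forall j, hp h b theta j = hz _ _ u al be j.
  case=> [//|j]; rewrite /hp /hz /= /sj -lock /u scalerA.
  by rewrite {1}(splitr (theta j.+1)); have [_ -> _] := Ctrig _ (theta j.+1 / 2).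
have HN : (m.*2.+2 <= N)%N by rewrite /N doubleS.
split.
- rewrite /N !ccE !hpE (Veven m.+1) doubleS !subSS !subn0.
  rewrite (Veven m) (Veven2 m 1) (Veven2 m 2) (Veven2 m 3).
  exact: (even_main _ _ _ _ _ _ Hsq Ha1 Ha2 Hc Hpy _ HN).
- have HN' : (m.*2.+1 <= N)%N by rewrite /N doubleS.
  have Vo : V h b theta m.*2.+1 =
      T _ _ u al be m (g _ _ u al be m.*2.+1 * g _ _ u al be m.*2.+1).
    rewrite /V /= odd_double /= doubleK /Vodd.
    set th' := (fun j => _).
    have -> : Vev h b th' m.+1 = Gv _ _ (gate h b th') m.+1 * GvT _ _ (gate h b th') m.+1 by [].
    rewrite Gv_rec GvT_rec.
    have E1 : gate h b th' m.*2.+2 = 1.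
      by rewrite /gate /th' doubleS eqxx mul0r Ccos0 Csin0 mul0r scale0r addr0 scale1r.
    have E2 : gate h b th' m.*2.+1 = g _ _ u al be m.*2.+1.
      by rewrite -Eg /gate /th' ifF // doubleS eqSS ltn_eqF.
    have [E3 E4] := Gv_ext _ _ (gate h b th') (g _ _ u al be) m
      (fun j Hj => ltac:(rewrite -Eg /gate /th' ifF //; apply: ltn_eqF; rewrite doubleS; lia)).
    by rewrite E1 E2 E3 E4 mul1r mulr1 /T !mulrA.
  rewrite /N !ccE !hpE doubleS !subSS !subn0 (Veven m) (Veven2 m 1) Vo.
  exact: (odd_main _ _ _ _ _ _ Hsq Ha1 Ha2 Hc Hpy _ HN').
Qed.
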